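(* Let $n\ge1$, let $p$ be a prime, and let $L(\mathbf{X})=\sum_{i,j=1}^n a_{ij}x_{ij}\in\mathbb{Z}[\mathbf{X}]$ be a linear form in the $n^2$ variables $\mathbf{X}=(x_{ij})_{i,j=1}^n$ which does not vanish modulo $p$ (i.e. not all $a_{ij}$ are divisible by $p$). Then \[ S_{p^2}(L)=\sum_{\substack{\mathbf{X}\in\mathbb{Z}_{p^2}^{n\times n}\\ \det\mathbf{X}\equiv0 \bmod p^2}}\exp\left(2\pi i\,L(\mathbf{X})/p^2\right)\ll p^{2n^2-(n+3)/2}, \] where the implied constant depends only on $n$.
   Context: $\mathbb{Z}_{m}$ denotes the residue ring modulo $m$, represented by $\{0,\dots,m-1\}$. *)

(* Defs.v *)
From HB Require Import structures.
From mathcomp Require Import all_boot all_order all_algebra.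
From mathcomp Require Import reals trigo exp.
Set Implicit Arguments. Unset Strict Implicit. Unset Printing Implicit Defensive.
Import Order.TTheory GRing.Theory Num.Theory.
Local Open Scope ring_scope.

Definition intmx (m n : nat) (X : 'M['I_m]_n) : 'M[int]_n :=
  map_mx (fun x : 'I_m => (nat_of_ord x)%:Z) X.

Definition linform (n : nat) (a X : 'M[int]_n) : int :=
  \sum_(i < n) \sum_(j < n) a i j * X i j.

(* Real and imaginary parts of
   S_{p^2}(L) = sum_{X in Z_{p^2}^{n x n}, det X = 0 mod p^2} e(L(X)/p^2),
   with e(t) = exp(2 pi i t) = cos(2 pi t) + i sin(2 pi t). *)
Definition Sp2_re (R : realType) (n p : nat) (a : 'M[int]_n) : R :=
  \sum_(X : 'M['I_(p ^ 2)]_n | ((p ^ 2)%:Z %| \det (intmx X))%Z)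
     cos (2 * pi * ((linform a (intmx X))%:~R / (p ^ 2)%:R)).

Definition Sp2_im (R : realType) (n p : nat) (a : 'M[int]_n) : R :=
  \sum_(X : 'M['I_(p ^ 2)]_n | ((p ^ 2)%:Z %| \det (intmx X))%Z)
     sin (2 * pi * ((linform a (intmx X))%:~R / (p ^ 2)%:R)).

Definition Sp2_abs (R : realType) (n p : nat) (a : 'M[int]_n) : R :=
  Num.sqrt (@Sp2_re R n p a ^+ 2 + @Sp2_im R n p a ^+ 2).

(* Main.v *)
Require Import Defs.
From HB Require Import structures.
From mathcomp Require Import all_boot all_order all_algebra.
From mathcomp Require Import reals trigo exp.
From mathcomp Require Import complex ring lra zify.
From Stdlib Require Import Lia.
Set Implicit Arguments. Unset Strict Implicit. Unset Printing Implicit Defensive.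
Import Order.TTheory GRing.Theory Num.Theory.
Local Open Scope ring_scope.
Local Open Scope complex_scope.
Definition ee (R : realType) (t : R) : R[i] := (cos t +i* sin t).
Lemma eeD (R : realType) (s t : R) : ee (s + t) = ee s * ee t.
Proof. rewrite /ee cosD sinD; simpc; congr (_ +i* _); ring. Qed.
Lemma ee0 (R : realType) : ee (0 : R) = 1.
Proof. by rewrite /ee cos0 sin0. Qed.
Lemma ee_nat (R : realType) (k : nat) : ee (2 * pi * k%:R : R) = 1.
Proof.
elim: k => [|k IH]; first by rewrite mulr0 ee0.
rewrite [k.+1%:R]mulrSr mulrDr mulr1 eeD IH mul1r /ee.
have ->: (2 * pi : R) = pi *+ 2 by rewrite mulr_natl.
by rewrite cos2pi sin2pi.
Qed.
Lemma eeN (R : realType) (t : R) : ee (- t) * ee t = 1.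
Proof. by rewrite -eeD addNr ee0. Qed.
Lemma ee_int (R : realType) (k : int) : ee (2 * pi * k%:~R : R) = 1.
Proof.
case: k => k; first by rewrite -pmulrn ee_nat.
rewrite NegzE mulrNz mulrN.
have h := eeN (2 * pi * (k.+1)%:R : R).
by rewrite ee_nat mulr1 in h; rewrite -pmulrn.
Qed.
Definition EE (R : realType) (N : nat) (k : int) : R[i] :=
  ee (2 * pi * (k%:~R / N%:R)).
Lemma EED (R : realType) N k l : @EE R N (k + l) = EE R N k * EE R N l.
Proof. by rewrite /EE -eeD intrD (mulrDl (k%:~R)) (mulrDr (2 * pi)). Qed.
Lemma EE_mulN (R : realType) N k : (0 < N)%N -> @EE R N (N%:Z * k) = 1.
Proof.
move=> hN; rewrite /EE intrM -pmulrn (mulrAC (N%:R)) mulfV ?mul1r ?ee_int //.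
by rewrite pnatr_eq0 -lt0n.
Qed.
Lemma EE_cong (R : realType) N k l : (0 < N)%N -> (N%:Z %| k - l)%Z ->
  @EE R N k = EE R N l.
Proof.
move=> hN /dvdzP [t ht].
have ->: k = l + N%:Z * t by rewrite mulrC -ht addrC subrK.
by rewrite EED EE_mulN // mulr1.
Qed.
Lemma EE_scale (R : realType) p k : (0 < p)%N ->
  @EE R (p ^ 2) (p%:Z * k) = EE R p k.
Proof.
move=> hp; rewrite /EE intrM natrX; congr (ee (_ * _)).
have hp0 : (p%:R : R) != 0 by rewrite pnatr_eq0 -lt0n.
rewrite -pmulrn; field; exact hp0.
Qed.
Lemma EE_pow (R : realType) N c (v : nat) : @EE R N (v%:Z * c) = EE R N c ^+ v.
Proof.
elim: v => [|v IH]; first by rewrite mul0r expr0 /EE (_ : (0%:~R : R) = 0) // mul0r mulr0 ee0.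
by rewrite exprSr -IH -EED; congr EE; rewrite -[v.+1]addn1 PoszD mulrDl mul1r.
Qed.
Lemma EE_ne1 (R : realType) p (r : nat) : (0 < r)%N -> (r < p)%N -> @EE R p r != 1.
Proof.
move=> r0 rp; apply/eqP => h.
have hre : complex.Re (@EE R p r) = 1 by rewrite h.
move: hre; rewrite /EE /ee /= -pmulrn.
have hp0 : (0 < p%:R :> R) by rewrite ltr0n (ltn_trans r0 rp).
set y : R := pi * (r%:R / p%:R).
have -> : (2 * pi * (r%:R / p%:R) : R) = y *+ 2 by rewrite /y mulr2n; ring.
rewrite cos_mulr2n cos2sin2 => h1.
have hy : 0 < sin y.
  apply: sin_gt0_pi; apply/andP; split.
    by rewrite /y mulr_gt0 ?pi_gt0 // divr_gt0 // ltr0n.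
  rewrite /y -[ltRHS]mulr1 ltr_pM2l ?pi_gt0 // ltr_pdivrMr // mul1r ltr_nat //.
have : sin y ^+ 2 = 0 by move: h1; lra.
by move/eqP; rewrite sqrf_eq0 (gt_eqF hy).
Qed.
Lemma sumEE (R : realType) p c : (0 < p)%N ->
  \sum_(v < p) @EE R p (v%:Z * c) = if (p%:Z %| c)%Z then p%:R else 0.
Proof.
move=> hp; have hpz : (p%:Z != 0) by case: p hp.
case: ifP => hc.
  move/dvdzP: hc => [t ->].
  rewrite (eq_bigr (fun _ => 1)); last first.
    by move=> v _; rewrite mulrA mulrC EE_mulN.
  by rewrite sumr_const card_ord.
set z := EE R p c.
have hz1 : z ^+ p = 1 by rewrite /z -EE_pow EE_mulN.
have hzn : z != 1.
  have hr : (p%:Z %| c - (c %% p%:Z)%Z)%Z.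
    by rewrite -eqz_mod_dvd modz_mod.
  rewrite /z (EE_cong R hp hr).
  have hge : (0 <= (c %% p%:Z)%Z)%R by rewrite modz_ge0.
  rewrite -(gez0_abs hge); apply: EE_ne1.
    rewrite lt0n absz_eq0; apply: contraFneq hc => h0.
    by apply/dvdz_mod0P.
  by rewrite -ltz_nat (gez0_abs hge) ltz_mod.
rewrite (eq_bigr (fun v : 'I_p => z ^+ v)); last by move=> v _; rewrite EE_pow.
have : (z - 1) * \sum_(v < p) z ^+ v = 0 by rewrite -subrX1 hz1 subrr.
by move/eqP; rewrite mulf_eq0 subr_eq0 (negbTE hzn) /= => /eqP.
Qed.
Lemma average (R : realType) (T : finType) (Q : pred T) (f : T -> R[i])
  (c : T -> int) (p : nat) (sg tau : nat -> T -> T) :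
  (0 < p)%N ->
  (forall v, cancel (sg v) (tau v)) ->
  (forall v X, Q (sg v X) = Q X) ->
  (forall v X, Q X -> f (sg v X) = f X * EE R p (v%:Z * c X)) ->
  \sum_(X | Q X) f X = \sum_(X | Q X && (p%:Z %| c X)%Z) f X.
Proof.
move=> hp hc hQ hf.
have H v : \sum_(X | Q X) f X = \sum_(X | Q X) f X * EE R p (v%:Z * c X).
  rewrite (reindex_inj (can_inj (hc v))) /=.
  rewrite (eq_bigl Q) => [|X]; last exact: hQ.
  by apply: eq_bigr => X hX; apply: hf.
have hp0 : (p%:R : R[i]) != 0 by rewrite pnatr_eq0 -lt0n.
apply: (mulfI hp0).
rewrite mulr_natl.
have -> : (\sum_(X | Q X) f X) *+ p = \sum_(v < p) \sum_(X | Q X) f X.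
  by rewrite sumr_const card_ord.
rewrite (eq_bigr (fun v : 'I_p => \sum_(X | Q X) f X * EE R p (v%:Z * c X)));
  last by move=> v _; apply: H.
rewrite exchange_big /=.
rewrite (eq_bigr (fun X => f X * (if (p%:Z %| c X)%Z then p%:R else 0)));
  last by move=> X _; rewrite -mulr_sumr sumEE.
rewrite big_mkcondr mulr_sumr; apply: eq_bigr => X _.
by case: ifP => _; rewrite ?mulr0 // mulrC.
Qed.
Local Close Scope complex_scope.
Definition cong (d x y : int) := (d %| x - y)%Z.
Lemma cong_refl d x : cong d x x.
Proof. by rewrite /cong subrr dvdz0. Qed.
Lemma cong_sym d x y : cong d x y -> cong d y x.
Proof. by rewrite /cong -opprB rpredN. Qed.
Lemma cong_trans d x y z : cong d x y -> cong d y z -> cong d x z.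
Proof.
rewrite /cong => h1 h2; have -> : x - z = (x - y) + (y - z) by ring.
exact: rpredD.
Qed.
Lemma congD d x1 y1 x2 y2 : cong d x1 y1 -> cong d x2 y2 -> cong d (x1 + x2) (y1 + y2).
Proof.
rewrite /cong => h1 h2; have -> : (x1 + x2) - (y1 + y2) = (x1 - y1) + (x2 - y2) by ring.
exact: rpredD.
Qed.
Lemma congN d x y : cong d x y -> cong d (- x) (- y).
Proof. rewrite /cong => h; have -> : - x - - y = - (x - y) by ring.
by rewrite rpredN. Qed.
Lemma congM d x1 y1 x2 y2 : cong d x1 y1 -> cong d x2 y2 -> cong d (x1 * x2) (y1 * y2).
Proof.
rewrite /cong => h1 h2; have -> : (x1 * x2) - (y1 * y2) = x1 * (x2 - y2) + (x1 - y1) * y2 by ring.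
by apply: rpredD; [apply: dvdz_mull | apply: dvdz_mulr].
Qed.
Lemma cong_scale d c x y : cong d x y -> cong (c * d) (c * x) (c * y).
Proof. by rewrite /cong => h; rewrite -mulrBr; apply: dvdz_mul. Qed.
Lemma cong_weaken d d' x y : (d' %| d)%Z -> cong d x y -> cong d' x y.
Proof. by move=> h1 h2; apply: dvdz_trans h2. Qed.
Lemma cong0 d x : (d %| x)%Z = cong d x 0.
Proof. by rewrite /cong subr0. Qed.
Lemma cong_sum d (I : Type) (r : seq I) (P : pred I) (F G : I -> int) :
  (forall i, P i -> cong d (F i) (G i)) ->
  cong d (\sum_(i <- r | P i) F i) (\sum_(i <- r | P i) G i).
Proof.
move=> h; apply: (big_ind2 (cong d)); [exact: cong_refl | | exact: h].
by move=> *; apply: congD.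
Qed.
Lemma cong_prod d (I : Type) (r : seq I) (P : pred I) (F G : I -> int) :
  (forall i, P i -> cong d (F i) (G i)) ->
  cong d (\prod_(i <- r | P i) F i) (\prod_(i <- r | P i) G i).
Proof.
move=> h; apply: (big_ind2 (cong d)); [exact: cong_refl | | exact: h].
by move=> *; apply: congM.
Qed.

Definition mxcong d n (A B : 'M[int]_n) := forall i j, cong d (A i j) (B i j).
Lemma mxcong_refl d n (A : 'M[int]_n) : mxcong d A A.
Proof. by move=> i j; apply: cong_refl. Qed.
Lemma mxcong_sym d n (A B : 'M[int]_n) : mxcong d A B -> mxcong d B A.
Proof. by move=> h i j; apply: cong_sym. Qed.
Lemma mxcong_trans d n (A B C : 'M[int]_n) : mxcong d A B -> mxcong d B C -> mxcong d A C.
Proof. by move=> h1 h2 i j; apply: cong_trans (h1 i j) (h2 i j). Qed.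
Lemma mxcongD d n (A B C D : 'M[int]_n) : mxcong d A B -> mxcong d C D ->
  mxcong d (A + C) (B + D).
Proof. by move=> h1 h2 i j; rewrite !mxE; apply: congD. Qed.
Lemma mxcongN d n (A B : 'M[int]_n) : mxcong d A B -> mxcong d (- A) (- B).
Proof. by move=> h i j; rewrite !mxE; apply: congN. Qed.
Lemma mxcongM d n (A B C D : 'M[int]_n) : mxcong d A B -> mxcong d C D ->
  mxcong d (A *m C) (B *m D).
Proof.
by move=> h1 h2 i j; rewrite !mxE; apply: cong_sum => k _; apply: congM.
Qed.
Lemma mxcong_scale d c n (A B : 'M[int]_n) : mxcong d A B ->
  mxcong (c * d) (c *: A) (c *: B).
Proof. by move=> h i j; rewrite !mxE; apply: cong_scale. Qed.
Lemma mxcong_weaken d d' n (A B : 'M[int]_n) : (d' %| d)%Z -> mxcong d A B -> mxcong d' A B.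
Proof. by move=> h1 h2 i j; apply: cong_weaken (h2 i j). Qed.
Lemma mxcong_scale0 d n (A : 'M[int]_n) : mxcong d (d *: A) 0.
Proof. by move=> i j; rewrite !mxE /cong subr0 dvdz_mulr. Qed.
Lemma det_cong d n (A B : 'M[int]_n) : mxcong d A B -> cong d (\det A) (\det B).
Proof.
move=> h; rewrite /determinant; apply: cong_sum => s _.
by apply: congM; [exact: cong_refl | apply: cong_prod => i _; apply: h].
Qed.
Lemma linform_cong d n (a A B : 'M[int]_n) : mxcong d A B ->
  cong d (linform a A) (linform a B).
Proof.
move=> h; rewrite /linform; apply: cong_sum => i _; apply: cong_sum => j _.
by apply: congM; [exact: cong_refl | apply: h].
Qed.
Lemma linformD n (a A B : 'M[int]_n) : linform a (A + B) = linform a A + linform a B.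
Proof.
rewrite /linform -big_split; apply: eq_bigr => i _.
by rewrite -big_split; apply: eq_bigr => j _; rewrite mxE mulrDr.
Qed.
Lemma linformZ n (a A : 'M[int]_n) c : linform a (c *: A) = c * linform a A.
Proof.
rewrite /linform mulr_sumr; apply: eq_bigr => i _.
by rewrite mulr_sumr; apply: eq_bigr => j _; rewrite mxE mulrCA.
Qed.
Lemma red_proof m (hm : (0 < m)%N) (z : int) : (`|(z %% m%:Z)%Z| < m)%N.
Proof.
have hmz : m%:Z != 0 by case: m hm.
by rewrite -ltz_nat gez0_abs ?modz_ge0 ?ltz_mod.
Qed.
Definition red m (hm : (0 < m)%N) (z : int) : 'I_m := Ordinal (red_proof hm z).
Lemma red_val m (hm : (0 < m)%N) z : ((red hm z : nat) : int) = (z %% m%:Z)%Z.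
Proof. have hmz : m%:Z != 0 by case: m hm. by rewrite /= gez0_abs ?modz_ge0. Qed.
Lemma red_cong m (hm : (0 < m)%N) z : cong m%:Z ((red hm z : nat) : int) z.
Proof. by rewrite red_val /cong -eqz_mod_dvd modz_mod. Qed.
Lemma red_eq m (hm : (0 < m)%N) z w : cong m%:Z z w -> red hm z = red hm w.
Proof.
move=> h; apply: val_inj => /=; congr absz; apply/eqP.
by rewrite eqz_mod_dvd.
Qed.
Lemma red_nat m (hm : (0 < m)%N) (x : 'I_m) : red hm (x : nat)%:Z = x.
Proof.
apply: val_inj => /=; rewrite modz_small //; apply/andP; split => //.
by rewrite ltz_nat.
Qed.
Definition redmx m (hm : (0 < m)%N) n (A : 'M[int]_n) : 'M['I_m]_n :=
  map_mx (red hm) A.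
Lemma intmx_redmx m (hm : (0 < m)%N) n (A : 'M[int]_n) :
  mxcong m%:Z (intmx (redmx hm A)) A.
Proof. by move=> i j; rewrite /intmx /redmx !mxE red_cong. Qed.
Lemma redmx_intmx m (hm : (0 < m)%N) n (X : 'M['I_m]_n) : redmx hm (intmx X) = X.
Proof. by apply/matrixP => i j; rewrite /intmx /redmx !mxE red_nat. Qed.
Lemma redmx_cong m (hm : (0 < m)%N) n (A B : 'M[int]_n) :
  mxcong m%:Z A B -> redmx hm A = redmx hm B.
Proof. by move=> h; apply/matrixP => i j; rewrite /redmx !mxE; apply: red_eq. Qed.
Lemma intmx_inj m (hm : (0 < m)%N) n (X Y : 'M['I_m]_n) :
  mxcong m%:Z (intmx X) (intmx Y) -> X = Y.
Proof. by move=> h; rewrite -(redmx_intmx hm X) -(redmx_intmx hm Y); apply: redmx_cong. Qed.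

Lemma L1 n (c d : int) (A B C : 'M[int]_n) :
  (1%:M + c *: A) *m B *m (1%:M + d *: C) =
  B + c *: (A *m B) + d *: (B *m C) + (c * d) *: (A *m B *m C).
Proof.
rewrite mulmxDl mul1mx mulmxDr mulmx1 mulmxDl -!scalemxAl -!scalemxAr -?scalemxAl.
by rewrite scalerA !addrA.
Qed.

Definition sig (p : nat) (hm : (0 < p ^ 2)%N) n (V W : 'M[int]_n)
  (X : 'M['I_(p ^ 2)]_n) : 'M['I_(p ^ 2)]_n :=
  redmx hm ((1%:M + p%:Z *: V) *m intmx X *m (1%:M + p%:Z *: W)).

Lemma pm (p : nat) : ((p ^ 2)%N : int) = p%:Z * p%:Z.
Proof. by rewrite -PoszM mulnn. Qed.

Lemma G1 p (hm : (0 < p ^ 2)%N) n (V W : 'M[int]_n) X :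
  mxcong (p ^ 2)%N (intmx (sig hm V W X))
    (intmx X + p%:Z *: (V *m intmx X + intmx X *m W)).
Proof.
apply: mxcong_trans (intmx_redmx _ _) _.
rewrite L1 scalerDr addrA.
rewrite -[X in mxcong _ _ X]addr0; apply: mxcongD; first exact: mxcong_refl.
by rewrite pm; apply: mxcong_scale0.
Qed.
Lemma sig_congp p (hm : (0 < p ^ 2)%N) n (V W : 'M[int]_n) X :
  mxcong p%:Z (intmx (sig hm V W X)) (intmx X).
Proof.
have hpm : (p%:Z %| (p ^ 2)%N%:Z)%Z by rewrite pm dvdz_mulr.
apply: mxcong_trans (mxcong_weaken hpm (G1 hm V W X)) _.
rewrite -[X in mxcong _ _ X]addr0; apply: mxcongD; first exact: mxcong_refl.
exact: mxcong_scale0.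
Qed.

Lemma sigK p (hm : (0 < p ^ 2)%N) n (V W : 'M[int]_n) :
  cancel (sig hm V W) (sig hm (- V) (- W)).
Proof.
move=> X; apply: (intmx_inj hm).
set Y := sig hm V W X.
have h1 := G1 hm (- V) (- W) Y.
have h2 := G1 hm V W X.
have h3 := sig_congp hm V W X.
have h4 : mxcong (p%:Z * p%:Z) (p%:Z *: (- V *m intmx Y + intmx Y *m - W))
   (p%:Z *: (- V *m intmx X + intmx X *m - W)).
  apply: mxcong_scale; apply: mxcongD.
    by apply: mxcongM => //; apply: mxcong_refl.
  by apply: mxcongM => //; apply: mxcong_refl.
rewrite -pm in h4.
apply: mxcong_trans h1 _.
have -> : intmx X = (intmx X + p%:Z *: (V *m intmx X + intmx X *m W)) +
   p%:Z *: (- V *m intmx X + intmx X *m - W).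
  by rewrite mulNmx mulmxN -opprD scalerN addrK.
exact: mxcongD.
Qed.

Lemma dvd_cong d x y : cong d x y -> (d %| x)%Z = (d %| y)%Z.
Proof.
move=> h; apply/idP/idP => hd.
  have -> : y = x - (x - y) by ring.
  by rewrite rpredB.
have -> : x = (x - y) + y by ring.
by rewrite rpredD.
Qed.

Lemma sigP p (hm : (0 < p ^ 2)%N) n (V W : 'M[int]_n) X :
  ((p ^ 2)%N%:Z %| \det (intmx X))%Z ->
  ((p ^ 2)%N%:Z %| \det (intmx (sig hm V W X)))%Z.
Proof.
move=> h.
have hc := det_cong (intmx_redmx hm ((1%:M + p%:Z *: V) *m intmx X *m (1%:M + p%:Z *: W))).
rewrite /sig (dvd_cong hc) !det_mulmx.
by apply: dvdz_mulr; apply: dvdz_mull.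
Qed.

Lemma sigPE p (hm : (0 < p ^ 2)%N) n (V W : 'M[int]_n) X :
  ((p ^ 2)%N%:Z %| \det (intmx (sig hm V W X)))%Z =
  ((p ^ 2)%N%:Z %| \det (intmx X))%Z.
Proof.
apply/idP/idP; last exact: sigP.
by move/(sigP hm (- V) (- W)); rewrite sigK.
Qed.

Lemma sig_phase p (hm : (0 < p ^ 2)%N) n (a V W : 'M[int]_n) (v : int) X :
  cong (p ^ 2)%N (linform a (intmx (sig hm (v *: V) (v *: W) X)))
    (linform a (intmx X) + p%:Z * (v * linform a (V *m intmx X + intmx X *m W))).
Proof.
have h := linform_cong a (G1 hm (v *: V) (v *: W) X).
apply: cong_trans h _.
rewrite -scalemxAl -scalemxAr -scalerDr linformD !linformZ.
exact: cong_refl.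
Qed.
Definition Pdet p n (X : 'M['I_(p ^ 2)]_n) : bool := ((p ^ 2)%N%:Z %| \det (intmx X))%Z.
Definition fE (R : realType) p n (a : 'M[int]_n) (X : 'M['I_(p ^ 2)]_n) : R[i] :=
  EE R (p ^ 2) (linform a (intmx X)).
Arguments Pdet p [n] X.
Arguments fE R p [n] a X.
Definition cval n (a : 'M[int]_n) (t : 'M[int]_n * 'M[int]_n) m (X : 'M['I_m]_n) :=
  linform a (t.1 *m intmx X + intmx X *m t.2).
Definition condS p n (a : 'M[int]_n) (s : seq ('M[int]_n * 'M[int]_n)) m (X : 'M['I_m]_n) :=
  all (fun t => (p%:Z %| cval a t X)%Z) s.

Lemma iter (R : realType) p (hp : (0 < p)%N) (hm : (0 < p ^ 2)%N) n (a : 'M[int]_n) s :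
  \sum_(X | Pdet p X) fE R p a X = \sum_(X | Pdet p X && condS p a s X) fE R p a X.
Proof.
elim: s => [|t s IH]; first by apply: eq_bigl => X; rewrite /condS /= andbT.
rewrite IH.
rewrite (@average R _ (fun X => Pdet p X && condS p a s X) (fE R p a) (@cval n a t (p ^ 2)) p
  (fun v => sig hm (v%:Z *: t.1) (v%:Z *: t.2))
  (fun v => sig hm (- (v%:Z *: t.1)) (- (v%:Z *: t.2))) hp).
- by apply: eq_bigl => X; rewrite /condS /= -andbA; congr andb; rewrite andbC.
- by move=> v; apply: sigK.
- move=> v X; rewrite /Pdet sigPE; congr andb.
  apply: eq_all => t'; apply: dvd_cong; apply: linform_cong.
  apply: mxcongD.
    by apply: mxcongM; [apply: mxcong_refl | apply: sig_congp].
  by apply: mxcongM; [apply: sig_congp | apply: mxcong_refl].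
- move=> v X _; rewrite /fE.
  rewrite (EE_cong R _ (sig_phase hm a t.1 t.2 v%:Z X)); last by rewrite expn_gt0 hp.
  by rewrite EED EE_scale.
Qed.
Lemma dvd_sum (d : int) (I : Type) (r : seq I) (P : pred I) (F : I -> int) :
  (forall i, P i -> (d %| F i)%Z) -> (d %| \sum_(i <- r | P i) F i)%Z.
Proof.
move=> h; apply: (big_ind (fun z => (d %| z)%Z)) => //.
by move=> *; apply: rpredD.
Qed.

Lemma mul_deltaL n i0 k (A : 'M[int]_n) i j :
  ((delta_mx i0 k : 'M[int]_n) *m A) i j = (i == i0)%:R * A k j.
Proof.
rewrite mxE (bigD1 k) //= big1 => [|l /negbTE hl]; last by rewrite mxE hl andbF mul0r.
by rewrite mxE eqxx andbT addr0.
Qed.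
Lemma mul_deltaR n k j0 (A : 'M[int]_n) i j :
  (A *m (delta_mx k j0 : 'M[int]_n)) i j = A i k * (j == j0)%:R.
Proof.
rewrite mxE (bigD1 k) //= big1 => [|l /negbTE hl]; last by rewrite mxE hl mulr0.
by rewrite mxE eqxx addr0.
Qed.

Lemma cvalL n (a : 'M[int]_n) i0 k m (X : 'M['I_m]_n) :
  cval a (delta_mx i0 k, 0) X = \sum_j a i0 j * intmx X k j.
Proof.
rewrite /cval /= mulmx0 addr0 /linform (bigD1 i0) //=.
rewrite [X in _ + X]big1 => [|i hi].
  by rewrite addr0; apply: eq_bigr => j _; rewrite mul_deltaL eqxx mul1r.
by apply: big1 => j _; rewrite mul_deltaL (negbTE hi) mul0r mulr0.
Qed.
Lemma cvalR n (a : 'M[int]_n) k j0 m (X : 'M['I_m]_n) :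
  cval a (0, delta_mx k j0) X = \sum_i a i j0 * intmx X i k.
Proof.
rewrite /cval /= mul0mx add0r /linform exchange_big (bigD1 j0) //=.
rewrite [X in _ + X]big1 => [|j hj].
  by rewrite addr0; apply: eq_bigr => i _; rewrite mul_deltaR eqxx mulr1.
by apply: big1 => i _; rewrite mul_deltaR (negbTE hj) mulr0 mulr0.
Qed.

Lemma isolate n (p : nat) (b x y : 'I_n -> int) j0 : prime p -> ~~ (p%:Z %| b j0)%Z ->
  (p%:Z %| \sum_j b j * x j)%Z -> (p%:Z %| \sum_j b j * y j)%Z ->
  (forall j, j != j0 -> cong p (x j) (y j)) -> cong p (x j0) (y j0).
Proof.
move=> hp hb hx hy hj.
have h : (p%:Z %| \sum_j b j * (x j - y j))%Z.
  have -> : \sum_j b j * (x j - y j) = \sum_j b j * x j - \sum_j b j * y j.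
    by rewrite -sumrB; apply: eq_bigr => j _; rewrite mulrBr.
  by rewrite rpredB.
move: h; rewrite (bigD1 j0) //= => h.
have h2 : (p%:Z %| \sum_(j | j != j0) b j * (x j - y j))%Z.
  by apply: dvd_sum => j hj0; apply: dvdz_mull; apply: hj.
have h3 : (p%:Z %| b j0 * (x j0 - y j0))%Z.
  have -> : b j0 * (x j0 - y j0) = (b j0 * (x j0 - y j0) +
     \sum_(j | j != j0) b j * (x j - y j)) - \sum_(j | j != j0) b j * (x j - y j) by ring.
  by rewrite rpredB.
have hc : coprimez p (b j0) by rewrite coprimezE prime_coprime.
by rewrite /cong -(Gauss_dvdzr _ hc).
Qed.
Definition cross n (i0 j0 : 'I_n) (x : 'I_n * 'I_n) : bool := (x.1 == i0) || (x.2 == j0).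
Lemma hi_proof p (x : 'I_(p ^ 2)) : (x %/ p < p ^ 2)%N.
Proof. exact: leq_ltn_trans (leq_div x p) (ltn_ord x). Qed.
Definition hi p (x : 'I_(p ^ 2)) : 'I_(p ^ 2) := Ordinal (hi_proof x).
Definition hmap p n (i0 j0 : 'I_n) (X : 'M['I_(p ^ 2)]_n) :
  {dffun forall x : 'I_n * 'I_n, 'I_(p ^ 2)} :=
  [ffun x => if cross i0 j0 x then hi (X x.1 x.2) else X x.1 x.2].
Definition sL n (i0 j0 : 'I_n) : seq ('M[int]_n * 'M[int]_n) :=
  [seq (delta_mx i0 k, 0) | k <- enum 'I_n] ++ [seq (0, delta_mx k j0) | k <- enum 'I_n].

Lemma rowcond p n (a : 'M[int]_n) i0 j0 m (X : 'M['I_m]_n) :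
  condS p a (sL i0 j0) X -> forall k, (p%:Z %| \sum_j a i0 j * intmx X k j)%Z.
Proof.
move=> /allP h k; rewrite -cvalL; apply: (h (delta_mx i0 k, 0)).
by rewrite mem_cat map_f ?mem_enum.
Qed.
Lemma colcond p n (a : 'M[int]_n) i0 j0 m (X : 'M['I_m]_n) :
  condS p a (sL i0 j0) X -> forall k, (p%:Z %| \sum_i a i j0 * intmx X i k)%Z.
Proof.
move=> /allP h k; rewrite -cvalR; apply: (h (0, delta_mx k j0)).
by rewrite mem_cat orbC map_f ?mem_enum.
Qed.

Lemma nat_cong (p x y : nat) : cong p x y -> (x %% p = y %% p)%N.
Proof.
by rewrite /cong -eqz_mod_dvd !modz_nat => /eqP [].
Qed.

Lemma hmap_inj p n (a : 'M[int]_n) i0 j0 (X Y : 'M['I_(p ^ 2)]_n) :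
  prime p -> ~~ (p%:Z %| a i0 j0)%Z ->
  condS p a (sL i0 j0) X -> condS p a (sL i0 j0) Y ->
  hmap i0 j0 X = hmap i0 j0 Y -> X = Y.
Proof.
move=> hp hb hX hY h.
have hXY i j : cross i0 j0 (i, j) = false -> X i j = Y i j.
  by move=> hc; have := congr1 (fun f : {dffun forall x : 'I_n * 'I_n, 'I_(p ^ 2)} => f (i, j)) h; rewrite !ffunE /= hc.
have hdiv i j : cross i0 j0 (i, j) -> (X i j %/ p = Y i j %/ p)%N.
  by move=> hc; have := congr1 (fun f : {dffun forall x : 'I_n * 'I_n, 'I_(p ^ 2)} => val (f (i, j))) h; rewrite !ffunE /= hc.
have hA k : k != i0 -> cong p (intmx X k j0) (intmx Y k j0).
  move=> hk.
  apply: (@isolate n p (fun j => a i0 j) (fun j => intmx X k j) (fun j => intmx Y k j)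
    j0 hp hb (rowcond hX k) (rowcond hY k)).
  move=> j hj; rewrite /intmx !mxE hXY ?cong_refl //.
  by rewrite /cross /= (negbTE hk) (negbTE hj).
have hB l : l != j0 -> cong p (intmx X i0 l) (intmx Y i0 l).
  move=> hl.
  apply: (@isolate n p (fun i => a i j0) (fun i => intmx X i l) (fun i => intmx Y i l)
    i0 hp hb (colcond hX l) (colcond hY l)).
  move=> i hi; rewrite /intmx !mxE hXY ?cong_refl //.
  by rewrite /cross /= (negbTE hi) (negbTE hl).
have hC : cong p (intmx X i0 j0) (intmx Y i0 j0).
  apply: (@isolate n p (fun j => a i0 j) (fun j => intmx X i0 j) (fun j => intmx Y i0 j)
    j0 hp hb (rowcond hX i0) (rowcond hY i0)).
  exact: hB.
have hall i j : cong p (intmx X i j) (intmx Y i j).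
  case: (eqVneq i i0) => [-> | hi].
    by case: (eqVneq j j0) => [-> | hj]; [exact: hC | exact: hB].
  case: (eqVneq j j0) => [-> | hj]; first exact: hA.
  by rewrite /intmx !mxE hXY ?cong_refl // /cross /= (negbTE hi) (negbTE hj).
apply/matrixP => i j; apply: val_inj.
case hc: (cross i0 j0 (i, j)); last by rewrite hXY.
have := hall i j; rewrite /intmx !mxE => /nat_cong hm.
by rewrite /= (divn_eq (X i j) p) (divn_eq (Y i j) p) (hdiv i j hc) hm.
Qed.
Lemma card_cross n (i0 j0 : 'I_n) :
  (#|[pred x : 'I_n * 'I_n | cross i0 j0 x]| + 1 = n + n)%N.
Proof.
have e1 : #|[pred x : 'I_n * 'I_n | x.1 == i0]| = n.
  transitivity #|[predX (pred1 i0) & 'I_n]|.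
    by apply: eq_card => -[x y]; rewrite !inE /= ?andbT ?/cross.
  by rewrite cardX card1 mul1n card_ord.
have e2 : #|[pred x : 'I_n * 'I_n | x.2 == j0]| = n.
  transitivity #|[predX 'I_n & (pred1 j0)]|.
    by apply: eq_card => -[x y]; rewrite !inE /= ?andbT ?/cross.
  by rewrite cardX card1 muln1 card_ord.
have e3 : #|[predI [pred x : 'I_n * 'I_n | x.1 == i0] & [pred x : 'I_n * 'I_n | x.2 == j0]]| = 1%N.
  transitivity #|[predX (pred1 i0) & (pred1 j0)]|.
    by apply: eq_card => -[x y]; rewrite !inE /= ?andbT ?/cross.
  by rewrite cardX !card1.
transitivity (#|[pred x : 'I_n * 'I_n | x.1 == i0]| + #|[pred x : 'I_n * 'I_n | x.2 == j0]|)%N;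
  last by rewrite e1 e2.
rewrite -cardUI e3; congr (_ + _)%N.
Qed.
Lemma card_family_prod (aT : finType) (rT : finType) (F : aT -> pred rT) :
  #|(family F : simpl_pred {dffun forall x : aT, rT})| = (\prod_(x : aT) #|F x|)%N.
Proof.
rewrite card_family foldrE big_map big_enum /=.
done.
Qed.
Lemma card_lt_p m p : (#|[pred y : 'I_m | (y < p)%N]| <= p)%N.
Proof.
rewrite cardE -(size_map val) -[X in (_ <= X)%N](size_iota 0 p).
apply: uniq_leq_size; first by rewrite map_inj_uniq ?enum_uniq //; apply: val_inj.
move=> x /mapP [y]; rewrite mem_enum inE => hy ->.
by rewrite mem_iota add0n.
Qed.

Lemma card_good p n (a : 'M[int]_n) i0 j0 : prime p -> ~~ (p%:Z %| a i0 j0)%Z ->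
  (#|[pred X : 'M['I_(p ^ 2)]_n | condS p a (sL i0 j0) X]| <=
     p ^ #|[pred x : 'I_n * 'I_n | cross i0 j0 x]| *
     (p ^ 2) ^ #|[pred x : 'I_n * 'I_n | ~~ cross i0 j0 x]|)%N.
Proof.
move=> hp hb.
set G := [pred X : 'M['I_(p ^ 2)]_n | condS p a (sL i0 j0) X].
have inj : {in G &, injective (hmap i0 j0)}.
  by move=> X Y; rewrite !inE => hX hY; apply: (hmap_inj hp hb hX hY).
rewrite -(card_in_imset inj).
pose F := fun x : 'I_n * 'I_n => if cross i0 j0 x
  then [pred y : 'I_(p ^ 2) | (y < p)%N] else [pred y : 'I_(p ^ 2) | true].
apply: (leq_trans (subset_leq_card
  (_ : _ \subset (family F : simpl_pred {dffun forall x : 'I_n * 'I_n, 'I_(p ^ 2)})))).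
  apply/subsetP => f /imsetP [X hX ->]; apply/familyP => x; rewrite ffunE /F.
  case: ifP => // _; rewrite inE /=.
  have hp0 : (0 < p)%N by apply: prime_gt0.
  by rewrite ltn_divLR // -expnSr ltn_ord.
rewrite card_family_prod.
apply: (@leq_trans (\prod_(x : 'I_n * 'I_n) (if cross i0 j0 x then p else p ^ 2))%N).
  apply: leq_prod => x _; rewrite /F; case: ifP => _; first exact: card_lt_p.
  by rewrite (eq_card (B := 'I_(p ^ 2))) ?card_ord.
rewrite (bigID (cross i0 j0)) /=.
rewrite (eq_bigr (fun _ => p)) => [|x ->] //.
rewrite [X in (_ * X)%N](eq_bigr (fun _ => p ^ 2)%N) => [|x /negbTE ->] //.
by rewrite -!prod_nat_const.
Qed.
Lemma sum_complex (R : rcfType) (I : finType) (P : pred I) (f g : I -> R) :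
  \sum_(i | P i) (f i +i* g i)%C = ((\sum_(i | P i) f i) +i* (\sum_(i | P i) g i))%C.
Proof.
by apply: (big_rec3 (fun a b c => a = (b +i* c)%C)) => // i y1 y2 y3 _ ->.
Qed.

Lemma normEE (R : realType) N k : `|@EE R N k| = 1.
Proof. by rewrite normc_def /= cos2Dsin2 sqrtr1. Qed.

Lemma abs_le_card (R : realType) n p (a : 'M[int]_n) s : prime p ->
  @Sp2_abs R n p a <= #|[pred X : 'M['I_(p ^ 2)]_n | Pdet p X && condS p a s X]|%:R.
Proof.
move=> hp.
have hp0 : (0 < p)%N by apply: prime_gt0.
have hm : (0 < p ^ 2)%N by rewrite expn_gt0 hp0.
set S := \sum_(X | Pdet p X) fE R p a X.
have hS : S = ((@Sp2_re R n p a) +i* (@Sp2_im R n p a))%C.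
  by rewrite /S /Sp2_re /Sp2_im -sum_complex.
have h : `|S| <= #|[pred X : 'M['I_(p ^ 2)]_n | Pdet p X && condS p a s X]|%:R.
  rewrite /S (iter R hp0 hm a s); apply: le_trans (ler_norm_sum _ _ _) _.
  rewrite (eq_bigr (fun _ => 1)) => [|X _]; last exact: normEE.
  by rewrite sumr_const.
rewrite normc_def hS /= in h.
by rewrite -(rmorph_nat (real_complex R)) lecR in h.
Qed.
Lemma card_P1 p : prime p ->
  (#|[pred X : 'M['I_(p ^ 2)]_1 | Pdet p X && true]| <= 1)%N.
Proof.
move=> hp.
have h0 (X : 'M['I_(p ^ 2)]_1) : Pdet p X -> (X ord0 ord0 : nat) = 0%N.
  rewrite /Pdet det_mx11 /intmx mxE /dvdz /= => hd.
  apply/eqP; apply: contraTT (ltn_ord (X ord0 ord0)) => hx.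
  by rewrite -leqNgt dvdn_leq // lt0n.
apply/card_le1_eqP => X Y; rewrite !inE !andbT => hX hY.
apply/matrixP => i j; rewrite !ord1; apply: val_inj.
by rewrite /= h0 // h0.
Qed.
Theorem lemma3p6 (R : realType) (n : nat) (hn : (0 < n)%N) :
  exists C : R, forall (p : nat) (a : 'M[int]_n),
    prime p ->
    (exists i j, ~~ ((p%:Z %| a i j)%Z)) ->
    @Sp2_abs R n p a <= C * (p%:R `^ ((2 * n ^ 2)%:R - (n + 3)%:R / 2)).
Proof.
exists 1 => p a hp [i0 [j0 hb]].
rewrite mul1r.
have hp1 : 1 <= (p%:R : R) by rewrite ler1n prime_gt0.
have hp0 : 0 <= (p%:R : R) by rewrite ler0n.
case: (ltngtP n 1) => [hlt | hgt | heq].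
- by move: hn; rewrite lt0n; move: hlt; rewrite ltnS leqn0 => ->.
- apply: le_trans (abs_le_card R a (sL i0 j0) hp) _.
  have hc := card_good hp hb.
  have hsub : (#|[pred X : 'M['I_(p ^ 2)]_n | Pdet p X && condS p a (sL i0 j0) X]| <=
     #|[pred X : 'M['I_(p ^ 2)]_n | condS p a (sL i0 j0) X]|)%N.
    by apply: subset_leq_card; apply/subsetP => X; rewrite !inE => /andP [].
  set c := #|[pred x : 'I_n * 'I_n | cross i0 j0 x]| in hc.
  set c' := #|[pred x : 'I_n * 'I_n | ~~ cross i0 j0 x]| in hc.
  have e1 : (c + 1 = n + n)%N by apply: card_cross.
  have e2 : (c + c' = n * n)%N.
    have -> : (n * n)%N = #|{: 'I_n * 'I_n}| by rewrite card_prod card_ord.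
    rewrite /c /c' -(cardC [pred x : 'I_n * 'I_n | cross i0 j0 x]).
    congr (_ + _)%N; apply: eq_card => x; by rewrite !inE.
  apply: (@le_trans _ _ ((p ^ (c + 2 * c'))%:R)).
    rewrite ler_nat; apply: leq_trans hsub _; apply: leq_trans hc _.
    by rewrite expnD expnM.
  rewrite natrX -powR_mulrn //; apply: ler_powR => //.
  have E : ((c + 2 * c') + 2 * n = 2 * (n ^ 2) + 1)%N.
    rewrite -mulnn; lia.
  have ER := congr1 (fun k => k%:R : R) E; rewrite /= !natrD !natrM in ER.
  have hn2 : (2 : R) <= n%:R by rewrite ler_nat.
  rewrite natrM natrD.
  move: ER hn2; set X := ((n ^ 2)%N%:R : R); set Y := ((c + 2 * c')%N%:R : R).
  move=> ER hn2; lra.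
- subst n.
  apply: le_trans (abs_le_card R a [::] hp) _.
  have -> : ((2 * 1 ^ 2)%:R - (1 + 3)%:R / 2 : R) = 0.
    by rewrite /=; field.
  rewrite powRr0 lern1; exact: card_P1 hp.
Qed.
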